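(* Let $n\in\mathbb{N}$ and let $x,y\in\{0,1\}^n$ with ${\sf dist}(x,y)=1$. Then ${\sf dist}({\sf signature}(x),{\sf signature}(y))\le 3$ (Hamming distance of strings over the alphabet $\{0,1,\sqcup\}$). Consequently, writing $C_x=\{c_k,c_{k+1},\dots,c_{n-k}\}$ and $C_y=\{c'_{k'},\dots,c'_{n-k'}\}$ for the chains containing $x$ and $y$ (with $|c_j|=j$ and $|c'_{j}|=j$), we have (1) $|k-k'|\le 1$, and (2) for all $j\in[k,n-k]$ and $j'\in[k',n-k']$, ${\sf dist}(c_j,c'_{j'})\le |j-j'|+6$.
   Context: ${\sf dist}$ is Hamming distance, $|z|$ the Hamming weight. Marking: for $x\in\{0,1\}^n$, regard each $1$ as an opening parenthesis and each $0$ as a closing parenthesis; a coordinate is marked if its symbol is matched in the standard parenthesis matching (equivalently: repeatedly pick a pair of coordinates $i<i'$ with $x_i=1$, $x_{i'}=0$ that are adjacent among the currently unmarked coordinates, mark both, and continue until no such pair remains; the resulting set of marked coordinates does not depend on the choices). The unmarked coordinates of $x$, read left to right, then form a string $0\cdots01\cdots1$. The signature ${\sf signature}(x)\in\{0,1,\sqcup\}^n$ has $i$-th entry $x_i$ if coordinate $i$ is marked and $\sqcup$ otherwise. The chain $C_x$ is the set of all $y\in\{0,1\}^n$ with ${\sf signature}(y)={\sf signature}(x)$; equivalently, all strings that agree with $x$ on its marked coordinates and whose restriction to the unmarked coordinates has the form $0\cdots01\cdots1$. If $x$ has $2k$ marked coordinates, $C_x=\{c_k,\dots,c_{n-k}\}$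 where $c_j$ is the unique element of weight $j$ (this is the de Bruijn–Tengbergen–Kruyswijk symmetric chain partition). *)

(* Defs.v *)
From mathcomp Require Import all_boot.
Set Implicit Arguments. Unset Strict Implicit. Unset Printing Implicit Defensive.

(* Binary strings of length n: n.-tuple bool (true = 1, false = 0).
   Coordinates are 0-indexed: 0 .. n-1. *)

Definition dist (T : eqType) (s t : seq T) : nat :=
  count (fun p => p.1 != p.2) (zip s t).

Definition weight (s : seq bool) : nat := count id s.

(* Standard parenthesis matching (1 = '(' , 0 = ')') via a stack:
   scanning left to right, a 1 pushes its index; a 0 pops the most recent
   unmatched 1 (if any) and both get marked. *)
Fixpoint match_aux (s : seq bool) (i : nat) (stk marked : seq nat) : seq nat :=
  match s with
  | [::] => marked
  | b :: s' =>
      if b then match_aux s' i.+1 (i :: stk) marked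
      else match stk with
           | [::] => match_aux s' i.+1 [::] marked
           | j :: stk' => match_aux s' i.+1 stk' (i :: j :: marked)
           end
  end.

Definition marked (s : seq bool) (i : nat) : bool := i \in match_aux s 0 [::] [::].

(* signature(x) in {0,1,⊔}^n : Some b = symbol b (marked), None = ⊔ *)
Definition signature (s : seq bool) : seq (option bool) :=
  [seq if marked s i then Some (nth false s i) else None | i <- iota 0 (size s)].

Definition nmarked (s : seq bool) : nat := count (marked s) (iota 0 (size s)).
Definition chain_k (s : seq bool) : nat := (nmarked s)./2.

Definition in_chain n (x z : n.-tuple bool) : bool := signature z == signature x.

Definition natdist (a b : nat) : nat := (a - b) + (b - a).

(* Main.v *)
Require Import Defs.
From mathcomp Require Import all_boot all_order all_algebra zify.
Import GRing.Theory Num.Theory Order.TTheory.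
Set Implicit Arguments. Unset Strict Implicit. Unset Printing Implicit Defensive.

Definition stp (b : bool) : int := if b then 1%R else (-1)%R.
Definition H (s : seq bool) (t : nat) : int := (\sum_(k < t) stp (nth false s k))%R.
Lemma H0 s : H s 0 = 0%R. Proof. by rewrite /H big_ord0. Qed.
Lemma HS s t : H s t.+1 = (H s t + stp (nth false s t))%R.
Proof. by rewrite /H big_ord_recr. Qed.
Lemma HT s t : nth false s t -> H s t.+1 = (H s t + 1)%R.
Proof. by rewrite HS /stp => ->. Qed.
Lemma HF s t : ~~ nth false s t -> H s t.+1 = (H s t - 1)%R.
Proof. by rewrite HS /stp => /negbTE ->. Qed.

Lemma ex_or_all (P : nat -> bool) a b :
  (exists t, (a < t <= b)%N /\ P t) \/ (forall t, (a < t <= b)%N -> ~~ P t).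
Proof.
case: (boolP (has P (iota a.+1 (b - a)))) => [/hasP [t] | /hasP hn].
  rewrite mem_iota => hm pt; left; exists t; split => //; lia.
right => t ht; apply/negP => pt; apply: hn; exists t => //; rewrite mem_iota; lia.
Qed.

Definition charm (s : seq bool) (n j : nat) : Prop :=
  if nth false s j then exists t, (j < t <= n)%N /\ (H s t <= H s j)%R
  else exists t, (t <= j)%N /\ (H s t < H s j)%R.

Lemma charm_mono s i i' j : (i <= i')%N -> charm s i j -> charm s i' j.
Proof.
rewrite /charm => ii; case: ifP => // _ [t [/andP [a b] c]].
by exists t; rewrite a /=; split => //; lia.
Qed.

Lemma charm_back s i j : (j < i)%N -> charm s i.+1 j ->
  charm s i j \/ (nth false s j /\ (forall t, (j < t <= i)%N -> (H s j < H s t)%R)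
                  /\ (H s i.+1 <= H s j)%R).
Proof.
rewrite /charm => ji; case: ifP => sj; last by left.
move=> [t [/andP [a b] c]].
case: (ex_or_all (fun t => H s t <= H s j)%R j i) => [[u [hu pu]]|hn].
  by left; exists u.
right; split => //; split.
  by move=> u hu; have := hn u hu; rewrite -ltNge.
case: (ltngtP t i.+1) => tt; last (by subst t).
  have := hn t; rewrite a /= => /(_ (ltac:(lia))); rewrite c //.
lia.
Qed.

Section Inv.
Variable s : seq bool.
Notation H := (H s).
Definition I1 i (stk : seq nat) := forall k, (k < size stk)%N -> H (nth 0%N stk k) = (H i - Posz k - 1)%R.
Definition I2 i (stk : seq nat) := forall t, (t <= i)%N -> (H i - Posz (size stk) <= H t)%R.
Definition I2' i (stk : seq nat) := exists t, (t <= i)%N /\ H t = (H i - Posz (size stk))%R.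
Definition I3 i (stk : seq nat) := forall j, j \in stk -> [/\ (j < i)%N, nth false s j &
     forall t, (j < t <= i)%N -> (H j < H t)%R].
Definition I4 i (mk : seq nat) := forall j, j \in mk <-> (j < i)%N /\ charm s i j.

Lemma complete i stk : I1 i stk -> I2 i stk -> I3 i stk ->
  forall j, (j < i)%N -> nth false s j -> (forall t, (j < t <= i)%N -> (H j < H t)%R) ->
  exists2 k, (k < size stk)%N & nth 0%N stk k = j.
Proof.
move=> h1 h2 h3 j ji sj hj.
have hji := hj i; rewrite ji leqnn in hji; have {}hji := hji isT.
have hjs := h2 j (ltnW ji).
pose k := absz (H i - H j - 1)%R.
have kE : Posz k = (H i - H j - 1)%R by rewrite /k; lia.
have ks : (k < size stk)%N by lia.
exists k => //.
have := mem_nth 0%N ks => /h3 [j'i sj' hj'].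
have e := h1 _ ks.
case: (ltngtP j (nth 0%N stk k)) => // c.
- have := hj (nth 0%N stk k); rewrite c /= (ltnW j'i) => /(_ isT); lia.
- have := hj' j; rewrite c /= (ltnW ji) => /(_ isT); lia.
Qed.

Lemma match_inv : forall suf i stk mk, (i <= size s)%N ->
  drop i s = suf -> I1 i stk -> I2 i stk -> I2' i stk -> I3 i stk -> I4 i mk ->
  forall j, j \in match_aux suf i stk mk <-> (j < size s)%N /\ charm s (size s) j.
Proof.
elim=> [|b suf IH] i stk mk isz hd h1 h2 h2' h3 h4 /=.
  have ei : i = size s by move: (congr1 size hd); rewrite size_drop /=; lia.
  by rewrite -ei.
have ilt : (i < size s)%N.
  by rewrite ltnNge; apply/negP => hh; move: hd; rewrite drop_oversize.
move: hd; rewrite (drop_nth false ilt) => -[hb hd].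
case: b hb => hb.
-
  have Hi := HT hb.
  apply: IH; [exact: ilt | exact: hd | | | | | ].
  + move=> k /=; case: k => [|k] /= hk; first by rewrite Hi; lia.
    rewrite h1 // Hi; lia.
  + move=> t; rewrite leq_eqVlt => /orP [/eqP -> | ]; first by rewrite /= Hi; lia.
    rewrite ltnS => /h2 /=; rewrite Hi; lia.
  + case: h2' => t [tl ht]; exists t; split; first by apply: leqW.
    rewrite ht Hi /=; lia.
  + move=> j; rewrite inE => /orP [/eqP -> | /h3 [ji sj hj]].
      split => // t /andP [a b]; have -> : t = i.+1 by lia. rewrite Hi; lia.
    split => //; first by apply: leqW.
    move=> t /andP [a b]; case: (ltngtP t i.+1) => c; [|lia|].
      by apply: hj; rewrite a; lia.
    subst t; have := hj i; rewrite ji leqnn => /(_ isT); rewrite Hi; lia.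
  + move=> j; rewrite h4; split.
      by move=> [ji cj]; split; [apply: leqW | apply: charm_mono cj].
    move=> [ji cj].
    have jne : j != i.
      apply/eqP=> e; subst j; move: cj; rewrite /charm hb => -[t [/andP [a b] c]].
      have et : t = i.+1 by lia. rewrite et Hi in c; lia.
    have ji' : (j < i)%N by lia.
    split => //; case: (charm_back ji' cj) => // -[sj [hj c]].
    have := hj i; rewrite ji' leqnn => /(_ isT); rewrite Hi in c; lia.
-
  have Hi := HF (negbT hb).
  case: stk h1 h2 h2' h3 => [|j0 stk] h1 h2 h2' h3.
  + apply: IH; [exact: ilt | exact: hd | | | | | ].
    * by move=> k.
    * move=> t; rewrite leq_eqVlt => /orP [/eqP -> | ]; first by rewrite /= Hi; lia.
      rewrite ltnS => /h2 /=; rewrite Hi; lia.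
    * by exists i.+1; split => //; rewrite Hi /=; lia.
    * by move=> j.
    * move=> j; rewrite h4; split.
        by move=> [ji cj]; split; [apply: leqW | apply: charm_mono cj].
      move=> [ji cj].
      have jne : j != i.
        apply/eqP=> e; subst j; move: cj; rewrite /charm hb => -[t [a c]].
        have := h2 t a; rewrite /=; lia.
      have ji' : (j < i)%N by lia.
      split => //; case: (charm_back ji' cj) => // -[sj [hj c]].
      by have [k] := complete h1 h2 h3 ji' sj hj.
  + have [j0i sj0 hj0] := h3 j0 (mem_head _ _).
    have e0 := h1 0%N isT.
    apply: IH; [exact: ilt | exact: hd | | | | | ].
    * move=> k hk; have := h1 k.+1 hk; rewrite /= Hi; lia.
    * move=> t; rewrite leq_eqVlt => /orP [/eqP -> | ]; first by rewrite /= Hi; lia.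
      rewrite ltnS => /h2 /=; rewrite Hi; lia.
    * case: h2' => t [tl ht]; exists t; split; first by apply: leqW.
      rewrite ht Hi /=; lia.
    * move=> j hj; have [ji sj hjt] := h3 j (mem_behead (s:=j0::stk) hj).
      split => //; first by apply: leqW.
      have ks : (index j stk < size stk)%N by rewrite index_mem.
      have := h1 (index j stk).+1 ks; rewrite /= nth_index // => ej.
      move=> t /andP [a b]; case: (ltngtP t i.+1) => c; [|lia|].
        by apply: hjt; rewrite a; lia.
      subst t; rewrite Hi; lia.
    * move=> j; rewrite !inE; split.
        move=> /orP [/eqP -> | /orP [/eqP -> | /h4 [ji cj]]].
        - split => //; rewrite /charm hb; case: h2' => t [tl ht]; exists t; split => //.
          rewrite ht /=; lia.
        - split; first by apply: leqW.
          rewrite /charm sj0; exists i.+1; split; first by lia.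
          rewrite Hi e0; lia.
        - by split; [apply: leqW | apply: charm_mono cj].
      move=> [ji cj].
      case: (eqVneq j i) => [-> // | jne].
      case: (eqVneq j j0) => [-> // | jne0].
      have ji' : (j < i)%N by lia.
      apply/orP; right; apply/orP; right; apply/h4.
      split => //; case: (charm_back ji' cj) => // -[sj [hj c]].
      have [k ks ek] := complete h1 h2 h3 ji' sj hj.
      case: k ks ek => [|k] ks ek; first by rewrite /= in ek; rewrite ek eqxx in jne0.
      have := h1 k.+1 ks; rewrite ek Hi in c *; lia.
Qed.
End Inv.

Lemma marked_char s j : marked s j <-> (j < size s)%N /\ charm s (size s) j.
Proof.
rewrite /marked; apply: match_inv; [by [] | exact: drop0 | | | | | ].
- by move=> k.
- by move=> t; rewrite leqn0 => /eqP ->; lia.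
- by exists 0%N; split => //; rewrite /= subr0.
- by move=> j'.
- by move=> j'; split => // -[].
Qed.

Lemma count_nth_iota (T : Type) (x0 : T) (P : pred T) (s : seq T) :
  count P s = count (fun i => P (nth x0 s i)) (iota 0 (size s)).
Proof. by rewrite -{1}(mkseq_nth x0 s) /mkseq count_map. Qed.

Lemma dist_nth (T : eqType) (a b : T) (s t : seq T) : size s = size t ->
  dist s t = count (fun i => nth a s i != nth b t i) (iota 0 (size s)).
Proof.
move=> e; rewrite /dist (count_nth_iota (a, b)) size_zip e minnn.
by apply: eq_count => i /=; rewrite nth_zip.
Qed.

Lemma dist_sym (T : eqType) (s t : seq T) : size s = size t -> dist s t = dist t s.
Proof.
case: s => [|a s] e; first by case: t e.
rewrite (dist_nth a a e) (dist_nth a a (esym e)) e.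
by apply: eq_count => i; rewrite eq_sym.
Qed.

Lemma size_sig s : size (signature s) = size s.
Proof. by rewrite /signature size_map size_iota. Qed.

Lemma nth_sig s i : (i < size s)%N ->
  nth None (signature s) i = if marked s i then Some (nth false s i) else None.
Proof. by move=> h; rewrite /signature (nth_map 0%N) ?size_iota // nth_iota. Qed.

Lemma count_lin (l : seq nat) (a b c d : pred nat) k :
  (forall i, i \in l -> a i + b i <= c i + k * d i)%N ->
  (count a l + count b l <= count c l + k * count d l)%N.
Proof.
elim: l => [|i l IH] //= h.
have h1 := h i (mem_head _ _).
have h2 := IH (fun j hj => h j (mem_behead (s := i :: l) hj)).
lia.
Qed.

Lemma count_inj3 (P : pred nat) (f : nat -> int) (l : seq nat) : uniq l ->
  (forall i, i \in l -> P i -> (0 <= f i <= 2)%R) ->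
  (forall i i', i \in l -> i' \in l -> P i -> P i' -> f i = f i' -> i = i') ->
  (count P l <= 3)%N.
Proof.
move=> ul hb hi; rewrite -size_filter -(size_map f).
have u : uniq (map f (filter P l)).
  rewrite map_inj_in_uniq ?filter_uniq // => i i'.
  by rewrite !mem_filter => /andP [pi li] /andP [pi' li']; apply: hi.
have sub : {subset map f (filter P l) <= [:: 0%R; 1%R; 2%R]}.
  move=> z /mapP [i]; rewrite mem_filter => /andP [pi li] ->.
  have := hb i li pi; rewrite !inE => hh.
  case: (f i =P 0%R) => [->//|n0]; case: (f i =P 1%R) => [->//|n1].
  have -> : f i = 2%R by lia. by [].
exact: (uniq_leq_size u sub).
Qed.

Lemma argmin (f : nat -> int) a b : (a <= b)%N ->
  exists t, (a <= t <= b)%N /\ forall u, (a <= u <= b)%N -> (f t <= f u)%R.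
Proof.
elim: b => [|b IH] ab.
  exists 0%N; split => [|u hu]; first lia.
  by have -> : u = 0%N by lia.
case: (leqP a b) => ab'.
  have [t [ht hm]] := IH ab'.
  case: (lerP (f t) (f b.+1)) => c.
    exists t; split; first lia.
    move=> u hu; case: (eqVneq u b.+1) => [->//|ne]; apply: hm; lia.
  exists b.+1; split; first lia.
  move=> u hu; case: (eqVneq u b.+1) => [->//|ne].
  have := hm u (ltac:(lia)); lia.
have ea : a = b.+1 by lia.
by exists b.+1; split => [|u hu]; [lia | have -> : u = b.+1 by lia].
Qed.

Lemma ex_or_all0 (P : nat -> bool) b :
  (exists t, (t <= b)%N /\ P t) \/ (forall t, (t <= b)%N -> ~~ P t).
Proof.
case: (boolP (has P (iota 0 b.+1))) => [/hasP [t] | /hasP hn].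
  rewrite mem_iota => hm pt; left; exists t; split => //; lia.
right => t ht; apply/negP => pt; apply: hn; exists t => //; rewrite mem_iota; lia.
Qed.

Section Flip.
Variables (x y : seq bool) (p : nat).
Hypotheses (sxy : size x = size y) (pn : (p < size x)%N) (xp : nth false x p)
  (yp : ~~ nth false y p) (exy : forall i, i != p -> nth false x i = nth false y i).

Lemma Hlo t : (t <= p)%N -> H x t = H y t.
Proof.
elim: t => [|t IH] tp; first by rewrite !H0.
rewrite !HS IH; last by lia.
by rewrite exy //; apply/eqP => e; lia.
Qed.

Lemma Hhi t : (p < t)%N -> H x t = (H y t + 2)%R.
Proof.
move=> pt; have -> : t = (p.+1 + (t - p.+1))%N by lia.
elim: (t - p.+1)%N => [|k IH].
  rewrite addn0 HT // HF // Hlo //; lia.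
rewrite addnS (HS x (p.+1 + k)) (HS y (p.+1 + k)) IH exy; first lia.
by apply/eqP => e; lia.
Qed.

Notation n := (size x).

Lemma Hyle t : (H y t <= H x t <= H y t + 2)%R.
Proof.
case: (leqP t p) => c; first by rewrite Hlo //; lia.
by rewrite Hhi //; lia.
Qed.

Lemma classify i : (i < n)%N -> i != p -> marked x i != marked y i ->
  (~~ nth false x i /\ (p < i)%N /\ (exists t, (t <= i)%N /\ (H x t < H x i)%R)
      /\ (forall t, (t <= i)%N -> (H y i <= H y t)%R))
  \/ (nth false x i /\ (i < p)%N /\ (forall t, (i < t <= n)%N -> (H x i < H x t)%R)
      /\ (exists t, (i < t <= n)%N /\ (H y t <= H y i)%R)).
Proof.
move=> iN ip hm.
have mx := marked_char x i; have my := marked_char y i.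
rewrite -sxy /charm -(exy ip) in my; rewrite /charm in mx.
have lt_or : (i < p)%N \/ (p < i)%N by move/eqP: ip; lia.
case sx: (nth false x i) mx my => mx my.
- case: lt_or => c.
  + right; do 2 split => //.
    have ei := Hlo (ltnW c).
    case: (boolP (marked x i)) => mxi.
      exfalso; have [_ [t [ht c1]]] := mx.1 mxi.
      have myi : marked y i.
        apply/my; split => //; exists t; split => //; have := Hyle t; lia.
      by move: hm; rewrite mxi myi.
    have myi : marked y i by move: hm; rewrite (negbTE mxi); case: (marked y i).
    split.
      move=> t ht; case: (ltrP (H x i) (H x t)) => // le.
      by exfalso; move/negP: mxi; apply; apply/mx; split => //; exists t.
    by have [_ [t [ht c1]]] := my.1 myi; exists t.
  + exfalso.
    have e : marked x i = marked y i.
      apply/idP/idP => h.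
        have [_ [t [ht c1]]] := mx.1 h; apply/my; split => //; exists t; split => //.
        have := Hhi c; have := Hhi (ltn_trans c (proj1 (andP ht))); lia.
      have [_ [t [ht c1]]] := my.1 h; apply/mx; split => //; exists t; split => //.
      have := Hhi c; have := Hhi (ltn_trans c (proj1 (andP ht))); lia.
    by rewrite e eqxx in hm.
- case: lt_or => c.
  + exfalso.
    have e : marked x i = marked y i.
      apply/idP/idP => h.
        have [_ [t [ht c1]]] := mx.1 h; apply/my; split => //; exists t; split => //.
        rewrite -!Hlo //; lia.
      have [_ [t [ht c1]]] := my.1 h; apply/mx; split => //; exists t; split => //.
      rewrite !Hlo //; lia.
    by rewrite e eqxx in hm.
  + left; do 2 split => //.
    have ei := Hhi c.
    case: (boolP (marked y i)) => myi.
      exfalso; have [_ [t [ht c1]]] := my.1 myi.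
      have mxi : marked x i.
        apply/mx; split => //; exists t; split => //; have := Hyle t; lia.
      by move: hm; rewrite mxi myi.
    have mxi : marked x i by move: hm; rewrite (negbTE myi); case: (marked x i).
    split; first by have [_ [t [ht c1]]] := mx.1 mxi; exists t.
    move=> t ht; case: (lerP (H y i) (H y t)) => // le.
    by exfalso; move/negP: myi; apply; apply/my; split => //; exists t.
Qed.

Lemma flip3 : (dist (signature x) (signature y) <= 3)%N.
Proof.
rewrite (dist_nth None None); last by rewrite !size_sig.
rewrite size_sig.
have [tm [htm hm]] := argmin (H x) (leq0n p).
have [tM [htM hM]] := argmin (H x) pn.
set m := H x tm; set M := H x tM.
set P := (fun i => _ != _).
have key : forall i, (i < n)%N -> P i -> i != p -> marked x i != marked y i.
  move=> i iN hP ip; apply/negP => /eqP e; move: hP; rewrite /P.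
  by rewrite nth_sig // nth_sig -?sxy // e (exy ip) eqxx.
have info : forall i, (i < n)%N -> P i -> i != p ->
  (~~ nth false x i /\ (p < i)%N /\ (m < H x i <= m + 2)%R /\ (M <= H x i - 1)%R
    /\ (forall t, (t <= i)%N -> (H y i <= H y t)%R))
  \/ (nth false x i /\ (i < p)%N /\ (H x i < M <= H x i + 2)%R /\ (m <= H x i)%R
    /\ (forall t, (i < t <= n)%N -> (H x i < H x t)%R)).
  move=> i iN hP ip.
  case: (classify iN ip (key i iN hP ip)) => [[sx [pi [[t [ht c1]] hy]]] | [sx [ip' [hx [t [ht c1]]]]]].
  - left; do 2 split => //.
    have ti : (t <= p)%N.
      rewrite leqNgt; apply/negP => pt; have := hy t ht; rewrite (Hhi pt) (Hhi pi) in c1 *; lia.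
    have h1 := hm t (ltac:(lia)).
    have h2 := hy tm (ltac:(lia)); rewrite -(Hlo (proj2 (andP htm))) -/m in h2.
    have h3 := hM i.+1 (ltac:(lia)); rewrite HF ?sx // -/M in h3.
    have h4 := Hhi pi.
    split; first lia. split; first lia. exact: hy.
  - right; do 2 split => //.
    have ti : (p < t)%N.
      rewrite ltnNge; apply/negP => tp; have := hx t ht; rewrite -(Hlo tp) -(Hlo (ltnW ip')) in c1; lia.
    have h1 := hx tM (ltac:(lia)); rewrite -/M in h1.
    have h2 := hM t (ltac:(lia)); rewrite -/M in h2.
    have h3 := hm i (ltac:(lia)); rewrite -/m in h3.
    have h4 := Hhi ti; have h5 := Hlo (ltnW ip').
    split; first lia. split; first lia. exact: hx.
pose cd i : int := if i == p then 0%R else if nth false x i then (M - H x i)%R else (H x i - m)%R.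
apply: (count_inj3 (f := cd) (iota_uniq 0 n)).
- move=> i; rewrite mem_iota => /andP [_ iN] hP; rewrite /cd.
  case: eqVneq => [_|ip]; first lia.
  case: (info i iN hP ip) => [[sx [_ [h1 _]]] | [sx [_ [h1 _]]]]; first rewrite (negbTE sx); last rewrite sx; lia.
- move=> i i'; rewrite !mem_iota => /andP [_ iN] /andP [_ iN'] hP hP'; rewrite /cd.
  case: (eqVneq i p) => [->|ip]; case: (eqVneq i' p) => [->|ip'] //.
  + case: (info i' iN' hP' ip') => [[sx [_ [h1 _]]] | [sx [_ [h1 _]]]]; first rewrite (negbTE sx); last rewrite sx; lia.
  + case: (info i iN hP ip) => [[sx [_ [h1 _]]] | [sx [_ [h1 _]]]]; first rewrite (negbTE sx); last rewrite sx; lia.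
  case: (info i iN hP ip) => [[sx [pi [h1 [h2 h3]]]] | [sx [pi [h1 [h2 h3]]]]];
  case: (info i' iN' hP' ip') => [[sx' [pi' [h1' [h2' h3']]]] | [sx' [pi' [h1' [h2' h3']]]]];
  rewrite ?sx ?sx' ?(negbTE sx) ?(negbTE sx') => e.
  + case: (ltngtP i i') => // c; exfalso.
    * have a := h3' i.+1 c; have b := Hhi (ltn_trans pi (ltnSn i)).
      have d := HF sx; have f := Hhi pi'; have g := Hhi pi; lia.
    * have a := h3 i'.+1 c; have b := Hhi (ltn_trans pi' (ltnSn i')).
      have d := HF sx'; have f := Hhi pi'; have g := Hhi pi; lia.
  + lia.
  + lia.
  + case: (ltngtP i i') => // c; exfalso.
    * have := h3 i' (ltac:(lia)); lia.
    * have := h3' i (ltac:(lia)); lia.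
Qed.
End Flip.

Lemma parity_inv : forall suf i (stk mk : seq nat), uniq (stk ++ mk) ->
  (forall j, j \in stk ++ mk -> (j < i)%N) -> ~~ odd (size mk) ->
  [/\ uniq (match_aux suf i stk mk),
      forall j, j \in match_aux suf i stk mk -> (j < i + size suf)%N
    & ~~ odd (size (match_aux suf i stk mk))].
Proof.
elim=> [|b suf IH] i stk mk u hb ev /=.
  rewrite addn0; split => //; first by rewrite cat_uniq in u; case/and3P: u.
  by move=> j hj; apply: hb; rewrite mem_cat hj orbT.
have fin : forall j, (j < i.+1 + size suf)%N -> (j < i + (size suf).+1)%N by move=> j; rewrite addnS.
have ni : i \notin stk ++ mk by apply/negP => /hb; rewrite ltnn.
case: b.
- have u1 : uniq ((i :: stk) ++ mk) by rewrite cat_cons /= ni.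
  have b1 : forall j, j \in (i :: stk) ++ mk -> (j < i.+1)%N.
    move=> j; rewrite cat_cons inE => /orP [/eqP -> // | /hb]; lia.
  have [u' b' e'] := IH i.+1 (i :: stk) mk u1 b1 ev.
  by split => // j hj; apply: fin; apply: b'.
case: stk u hb ni => [|j0 stk] u hb ni.
- have b1 : forall j, j \in [::] ++ mk -> (j < i.+1)%N by move=> j /hb; lia.
  have [u' b' e'] := IH i.+1 [::] mk u b1 ev.
  by split => // j hj; apply: fin; apply: b'.
- have u1 : uniq (stk ++ [:: i, j0 & mk]).
    rewrite (uniq_catCA stk [:: i; j0] mk) /=.
    by rewrite -cat_cons ni.
  have b1 : forall j, j \in stk ++ [:: i, j0 & mk] -> (j < i.+1)%N.
    move=> j; rewrite mem_cat !inE => /orP [h | /orP [/eqP -> | /orP [/eqP -> | h]]].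
    * have := hb j; rewrite inE mem_cat h orbT => /(_ isT); lia.
    * lia.
    * have := hb j0; rewrite inE eqxx => /(_ isT); lia.
    * have := hb j; rewrite inE mem_cat h !orbT => /(_ isT); lia.
  have [u' b' e'] := IH i.+1 stk [:: i, j0 & mk] u1 b1 (ltac:(by rewrite /= negbK)).
  by split => // j hj; apply: fin; apply: b'.
Qed.

Lemma nmarked_even s : ~~ odd (nmarked s).
Proof.
have [u b e] := @parity_inv s 0 [::] [::] isT (fun j (h : j \in [::]) => ltac:(done)) isT.
rewrite /nmarked /marked -size_filter.
set M := match_aux _ _ _ _ in u b e *.
suff /perm_size -> : perm_eq (filter (fun i => i \in M) (iota 0 (size s))) M by [].
apply: uniq_perm; rewrite ?filter_uniq ?iota_uniq // => j.
rewrite mem_filter mem_iota; case hj: (j \in M) => //=.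
by have := b j hj.
Qed.

Lemma unmarked_sorted s i i' : (i < i')%N -> (i' < size s)%N ->
  ~~ marked s i -> ~~ marked s i' -> nth false s i -> nth false s i'.
Proof.
move=> ii i'n mi mi' si; apply/negPn/negP => si'.
have iN : (i < size s)%N by lia.
have h1 : ~ (exists t, (i < t <= size s)%N /\ (H s t <= H s i)%R).
  by move=> hh; move/negP: mi; apply; apply/marked_char; split => //; rewrite /charm si.
have h2 : ~ (exists t, (t <= i')%N /\ (H s t < H s i')%R).
  by move=> hh; move/negP: mi'; apply; apply/marked_char; split => //; rewrite /charm (negbTE si').
case: (lerP (H s i') (H s i)) => c.
  by apply: h1; exists i'; split => //; lia.
by apply: h2; exists i; split => //; lia.
Qed.

Lemma chain_bound (c c' : seq bool) : size c = size c' ->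
  (dist c c' + weight c <= weight c' + 2 * dist (signature c) (signature c'))%N \/
  (dist c c' + weight c' <= weight c + 2 * dist (signature c) (signature c'))%N.
Proof.
move=> e.
rewrite (dist_nth false false e) (dist_nth None None); last by rewrite !size_sig.
rewrite /weight (count_nth_iota false) (count_nth_iota false _ c') size_sig -e.
set n := size c.
case: (boolP (has (fun i => [&& ~~ marked c i, ~~ marked c' i, nth false c i & ~~ nth false c' i]) (iota 0 n))).
- move=> /hasP [i1]; rewrite mem_iota => /andP [_ i1n] /and4P [m1 m1' c1 c1'].
  have B : forall i, (i < n)%N -> ~~ marked c i -> ~~ marked c' i -> nth false c' i -> nth false c i.
    move=> i iN mi mi' ci'; apply/negPn/negP => ci.
    case: (ltngtP i i1) => c0.
    - by move/negP: c1'; apply; apply: (unmarked_sorted (s := c') c0) => //; rewrite -e.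
    - by move/negP: ci; apply; apply: (unmarked_sorted (s := c) c0).
    - by subst i; rewrite c1 in ci.
  right; apply: count_lin => i; rewrite mem_iota => /andP [_ iN].
  have := B i iN.
  have iN' : (i < size c')%N by rewrite -e.
  rewrite !nth_sig //.
  by case: (marked c i) (marked c' i) (nth false c i) (nth false c' i) => [] [] [] [] //= h; have := h isT isT isT.
- move=> /hasPn A; left; apply: count_lin => i; rewrite mem_iota => /andP [_ iN].
  have := A i; rewrite mem_iota iN => /(_ isT).
  have iN' : (i < size c')%N by rewrite -e.
  rewrite !nth_sig //.
  by case: (marked c i) (marked c' i) (nth false c i) (nth false c' i) => [] [] [] [] //= h; have := h isT isT isT.
Qed.

Lemma nmarked_le (x y : seq bool) : size x = size y ->
  (nmarked x <= nmarked y + dist (signature x) (signature y))%N.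
Proof.
move=> e; rewrite (dist_nth None None); last by rewrite !size_sig.
rewrite /nmarked size_sig -e.
have := @count_lin (iota 0 (size x)) (marked x) pred0 (marked y)
  (fun i => nth None (signature x) i != nth None (signature y) i) 1.
rewrite count_pred0 addn0 mul1n; apply => i; rewrite mem_iota => /andP [_ iN].
have iN' : (i < size y)%N by rewrite -e.
rewrite !nth_sig //=.
by case: (marked x i) (marked y i) => [] [] //=; rewrite addn0 ?addn1.
Qed.

Theorem mainTheorem2 (n : nat) (x y : n.-tuple bool) :
  dist x y = 1 ->
  [/\ dist (signature x) (signature y) <= 3,
      natdist (chain_k x) (chain_k y) <= 1
    & forall (j j' : nat) (c c' : n.-tuple bool),
        chain_k x <= j <= n - chain_k x ->
        chain_k y <= j' <= n - chain_k y ->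
        in_chain x c -> weight c = j ->
        in_chain y c' -> weight c' = j' ->
        dist c c' <= natdist j j' + 6].
Proof.
move=> d1.
have sx : size x = n := size_tuple x.
have sy : size y = n := size_tuple y.
have sxy : size x = size y by rewrite sx sy.
move: d1; rewrite (dist_nth false false sxy) -size_filter sx.
set Q := (fun i => _ != _).
case E: (filter Q (iota 0 n)) => [|p [|]] //= _.
have hp : p \in filter Q (iota 0 n) by rewrite E mem_head.
rewrite mem_filter mem_iota /= in hp; case/andP: hp => Qp pn.
have exy : forall i, i != p -> nth false x i = nth false y i.
  move=> i ip; case: (ltnP i n) => iN.
    apply/eqP; apply/negPn/negP => qi.
    have : i \in filter Q (iota 0 n) by rewrite mem_filter mem_iota /= iN andbT.
    by rewrite E inE (negbTE ip).
  by rewrite !nth_default ?sx ?sy.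
have D : (dist (signature x) (signature y) <= 3)%N.
  case xp: (nth false x p).
    apply: (flip3 (p := p)) => //; first by rewrite sx.
    by move: Qp; rewrite /Q xp; case: (nth false y p).
  rewrite dist_sym ?size_sig //.
  apply: (flip3 (p := p)) => //; first by rewrite sy.
    by move: Qp; rewrite /Q xp; case: (nth false y p).
    by rewrite xp.
  by move=> i ip; rewrite exy.
split => //.
  have h1 := nmarked_le sxy; have h2 := nmarked_le (esym sxy).
  rewrite dist_sym ?size_sig // in h2.
  have ex := nmarked_even x; have ey := nmarked_even y.
  rewrite /natdist /chain_k.
  have := odd_double_half (nmarked x); have := odd_double_half (nmarked y).
  rewrite (negbTE ex) (negbTE ey) -!muln2; lia.
move=> j j' c c' _ _ /eqP hc wc /eqP hc' wc'.
have scc : size c = size c' by rewrite !size_tuple.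
have := chain_bound scc; rewrite hc hc' /weight in wc wc' * => -[] h;
rewrite /weight wc wc' in h; rewrite /natdist; lia.
Qed.
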